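(* In the $2$-coloured operad $\mathrm{Bulle}$, the set $G$ of the eight bubbles of arity $2$ is the generating set of $\mathrm{Bulle}$. That is, the smallest coloured suboperad of $\mathrm{Bulle}$ containing $G$ is $\mathrm{Bulle}$ itself, and $G$ is minimal for inclusion with this property.
   Context: The $2$-coloured operad $\mathrm{Bulle}$ can be described as follows. For $n\ge2$, its elements of arity $n$ (called bubbles) are the pairs $(c;d_1\cdots d_n)$ with $c\in\{1,2\}$ and $d_1,\dots,d_n\in\{1,2\}$, with output colour $c$ and $i$th input colour $d_i$. In addition, there are two units $\mathbf 1_1,\mathbf 1_2$ of arity $1$, where $\mathbf 1_c$ has output and input colour $c$. The partial composition $(c;d_1\cdots d_n)\circ_i(e;f_1\cdots f_m)$ is defined exactly when $d_i=e$, and equals $(c;d_1\cdots d_{i-1}f_1\cdots f_m d_{i+1}\cdots d_n)$. Geometrically, a bubble of arity $n$ is a polygon with $n+1$ vertices whose base and $n$ edges are each either blue or uncoloured, with no coloured diagonals. The output colour is $1$ iff the base is blue, and the $i$th input colour is $2$ iff the $i$th edge is blue. Composition glues the base of the second bubble onto the $i$th edge of the first. A coloured suboperad is a subset closed under defined compositions and containing both units. *)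

(* Defs.v *)
From mathcomp Require Import all_boot.
Set Implicit Arguments. Unset Strict Implicit. Unset Printing Implicit Defensive.

Inductive colour := col1 | col2.

(* A candidate element (c ; d_1 ... d_n) : output colour and list of input colours. *)
Record belem := Belem { out : colour; ins : seq colour }.

Definition is_bulle (x : belem) : Prop :=
  2 <= size (ins x) \/ ins x = [:: out x].

Definition arity (x : belem) : nat := size (ins x).

Definition unit_el (c : colour) : belem := Belem c [:: c].

(* Partial composition x o_{i+1} y (0-based index i), defined when the
   (i+1)-th input colour of x equals the output colour of y. *)
Definition comp (x : belem) (i : nat) (y : belem) : belem :=
  Belem (out x) (take i (ins x) ++ ins y ++ drop i.+1 (ins x)).

Definition comp_defined (x : belem) (i : nat) (y : belem) : Prop :=
  i < size (ins x) /\ nth col1 (ins x) i = out y.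

Definition suboperad (S : belem -> Prop) : Prop :=
  (forall x, S x -> is_bulle x) /\
  (forall c, S (unit_el c)) /\
  (forall x y i, S x -> S y -> comp_defined x i y -> S (comp x i y)).

Definition generated (G : belem -> Prop) (x : belem) : Prop :=
  forall S, suboperad S -> (forall g, G g -> S g) -> S x.

Definition arity2 (x : belem) : Prop := is_bulle x /\ arity x = 2.

(* Main.v *)
Require Import Defs.
From mathcomp Require Import all_boot.
From mathcomp Require Import zify.

Lemma gen_unit G c : generated G (unit_el c).
Proof. by move=> S [_ [HU _]] _; apply: HU. Qed.

Lemma gen_ar (n : nat) : forall x, size (ins x) = n.+2 -> generated arity2 x.
Proof.
elim: n => [|n IH] [c s] /= Hs S HS HG.
  by apply: HG; split; rewrite /arity /= ?Hs //; left; rewrite Hs.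
case: s Hs => [|d1 [|d2 r]] //= [Hr].
have -> : Belem c [:: d1, d2 & r] = Defs.comp (Belem c [:: d1; d2]) 1 (Belem d2 (d2 :: r)).
  by rewrite /Defs.comp /= cats0.
have [H1 [H2 H3]] := HS.
apply: H3; last by split.
  by apply: HG; split => //; left.
by apply: (IH (Belem d2 (d2 :: r))); rewrite //= Hr.
Qed.

Theorem proposition2p3 :
  (forall x, is_bulle x -> generated arity2 x) /\
  (forall H : belem -> Prop,
      (forall x, H x -> arity2 x) ->
      (forall x, is_bulle x -> generated H x) ->
      forall x, arity2 x -> H x).
Proof.
split.
  move=> [c s] [Hs|Hs].
    case: s Hs => [|a [|b r]] //= _.
    by apply: (@gen_ar (size r)).
  by rewrite /= in Hs; rewrite Hs; apply: gen_unit.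
move=> H HH Hgen x [Bx Ax].
pose S y := is_bulle y /\ (size (ins y) = 2 -> H y).
have : S x.
  apply: (Hgen x Bx S); last first.
    by move=> g Hg; split; [exact: (HH g Hg).1|].
  split; first by move=> y [].
  split; first by move=> c; split; [right|].
  move=> [cx sx] [cy sy] i [Bx' Hx'] [By' Hy'] [Hi Hn] /=.
  rewrite /= in Hi Hn Hx' Hy' Bx' By' *.
  have szy : 0 < size sy by case: By' => [/= h|/= ->] //; apply: leq_trans h.
  have szx : 0 < size sx by apply: leq_ltn_trans Hi.
  split.
    rewrite /is_bulle /= !size_cat size_take Hi size_drop.
    case: Bx' => [/= h2|/= Ex]; first by left; move: Hi szy h2; lia.
    case: By' => [/= h1|/= Ey]; first by left; move: Hi szy h1; lia.
    right; move: Hi Hn; rewrite Ex Ey /= => Hi.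
    have i0 : i = 0 by lia.
    by subst i => /= ->.
  rewrite /Defs.comp /= !size_cat size_take Hi size_drop => E.
  case: (ltnP 1 (size sy)) => h1.
    have sx1 : size sx = 1 by move: E Hi szy h1; lia.
    case: Bx' => [/=|/= Ex]; first by rewrite sx1.
    have i0 : i = 0 by move: Hi; rewrite sx1; lia.
    subst i; rewrite Ex /= in Hn *; rewrite ?cats0 Hn.
    by apply: Hy'; lia.
  case: By' => [/=|/= Ey]; first by move: h1 => /[swap]; lia.
  rewrite Ey /= -Hn -drop_nth // cat_take_drop.
  apply: Hx'; move: E; rewrite Ey /=; move: Hi; lia.
by move=> [_ ]; apply.
Qed.
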